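(* For every $n\ge0$, every element of $\mathcal B_{[n]}$ is a $P$-cycle in $W_{[n]}$, and the classes of the elements of $\mathcal B_{[n]}$ form an $\mathbb F_2$-basis of the Margolis homology $\mathcal M(W_{[n]},P)=\ker P/\operatorname{im}P$ (equivalently of $\mathcal M(M_{[n]},P)$).
   Context: Over $\mathbb F_2$, $R=\Lambda(t_i:i\ge1)\otimes\Lambda(x_i:i\ge1)$ with basis the monomials $t_Ix_J$ ($I,J\subset\mathbb N_+$ finite, $t_I=\prod_{i\in I}t_i$, $x_J=\prod_{j\in J}x_j$, $t_It_K=0$ if $I\cap K\neq\emptyset$), with linear operators $Q_1(t_Ix_J)=\sum_{j\in J}t_jt_Ix_{J\setminus\{j\}}$ and $P(t_Ix_J)=\sum_{K\subseteq J,|K|=2}t_Kt_Ix_{J\setminus K}$. For finite $J$, $W_J=\operatorname{span}\{t_Ix_{J\setminus I}:I\subseteq J\}$, closed under $Q_1,P$ and isomorphic as a $\Lambda(Q_1,P)$-module to $M_J=\bigotimes_{j\in J}M_j$, where $M_j$ has basis $t_j,x_j$ with $Q_1x_j=t_j$, $P=0$, and the tensor action uses $\Delta(P)=P\otimes1+Q_1\otimes Q_1+1\otimes P$. $[n]=\{1,\dots,n\}$. The exchange operation is the linear map $(t_Ix_J)^e=t_Jx_I$. Sets $\mathcal B_{[n]}$: $\mathcal B_{[0]}=\{1\}$; given $\mathcal B_{[2t]}$, $\mathcal B_{[2t+1]}=\{Q_1(b\,x_{2t+1})\}\cup\{Q_1(b\,x_{2t+1})^e\}$ and $\mathcal B_{[2t+2]}=\{Q_1(b\,x_{2t+1})x_{2t+2}\}\cup\{Q_1(b\,x_{2t+1})^e\,t_{2t+2}\}$,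 with $b$ ranging over $\mathcal B_{[2t]}$. *)

(* Defs.v *)
From HB Require Import structures.
From mathcomp Require Import all_boot all_order all_algebra.
Set Implicit Arguments. Unset Strict Implicit. Unset Printing Implicit Defensive.
Import GRing.Theory.
Local Open Scope ring_scope.

(* W_[n] : the F_2-vector space with basis the monomials t_I x_([n]\I), I ⊆ [n].
   The index i : 'I_n stands for the paper's index i+1 ∈ [n] = {1,..,n}.
   An element is its coefficient function: f I = coefficient of t_I x_([n]\I). *)
Definition W (n : nat) := {ffun {set 'I_n} -> 'F_2}.

Definition mono n (I : {set 'I_n}) : W n := [ffun K => (K == I)%:R].

Definition linext n m (g : {set 'I_n} -> W m) (f : W n) : W m :=
  [ffun K => \sum_(I : {set 'I_n}) f I * g I K].

Definition Q1 n : W n -> W n :=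
  linext (fun I => \sum_(j in ~: I) mono (j |: I)).

Definition Pop n : W n -> W n :=
  linext (fun I => \sum_(K : {set 'I_n} | (K \subset ~: I) && (#|K| == 2)) mono (K :|: I)).

Definition exch n : W n -> W n := linext (fun I => mono (~: I)).

Definition incl n (I : {set 'I_n}) : {set 'I_n.+1} :=
  [set widen_ord (leqnSn n) i | i in I].

(* multiplication by x_(n+1) : W_[n] -> W_[n+1], t_I x_J |-> t_I x_(J ∪ {n+1}) *)
Definition xmul n : W n -> W n.+1 := linext (fun I => mono (incl I)).

Definition tmul n : W n -> W n.+1 := linext (fun I => mono (ord_max |: incl I)).

Fixpoint Beven (t : nat) : {set W t.*2} :=
  match t return {set W t.*2} with
  | 0 => [set mono set0]
  | t'.+1 =>
      [set xmul (Q1 (xmul b)) | b in Beven t'] :|: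
      [set tmul (exch (Q1 (xmul b))) | b in Beven t']
  end.

Definition Bodd (t : nat) : {set W (t.*2).+1} :=
  [set Q1 (xmul b) | b in Beven t] :|: [set exch (Q1 (xmul b)) | b in Beven t].

(* The classes of the elements of S (a set of P-cycles) form an F_2-basis of
   the Margolis homology ker P / im P.  Over F_2, linear combinations are
   subset sums. *)
Definition margolis_basis n (S : {set W n}) : Prop :=
  [/\ (forall b, b \in S -> Pop b = 0),
      (forall z : W n, Pop z = 0 ->
         exists2 A : {set W n}, A \subset S &
           exists y : W n, z = \sum_(b in A) b + Pop y) &
      (forall A : {set W n}, A \subset S ->
         (exists y : W n, \sum_(b in A) b = Pop y) -> A = set0)].

(* Main.v *)
From HB Require Import structures.
Require Import Defs.
From mathcomp Require Import ring.
From mathcomp Require Import all_boot all_order all_algebra.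
Set Implicit Arguments. Unset Strict Implicit. Unset Printing Implicit Defensive.
Import GRing.Theory.
Local Open Scope ring_scope.

Lemma F2_addxx (x : 'F_2) : x + x = 0.
Proof. by rewrite -mulr2n (mulrn_pchar (pchar_Fp _)). Qed.
Lemma F2_cases (x : 'F_2) : x = 0 \/ x = 1.
Proof.
case: x => [[|[|m]]] Hm.
- by left; apply/val_inj.
- by right; apply/val_inj.
- by exfalso; move: Hm; rewrite Fp_cast.
Qed.
Lemma addxx n (f : W n) : f + f = 0.
Proof. by apply/ffunP => K; rewrite !ffunE F2_addxx. Qed.
Lemma oppW n (f : W n) : - f = f.
Proof. by apply/eqP; rewrite eq_sym -subr_eq0 opprK addxx. Qed.
Lemma addW_eq n (f g : W n) : (f + g == 0) = (f == g).
Proof. by rewrite -{1}(oppW g) subr_eq0. Qed.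

Lemma linext_zmod n m (g : {set 'I_n} -> W m) : zmod_morphism (linext g).
Proof.
move=> u v; apply/ffunP => K; rewrite !ffunE -sumrB; apply: eq_bigr => I _.
by rewrite !ffunE mulrBl.
Qed.
HB.instance Definition _ n := GRing.isZmodMorphism.Build (W n) (W n) (@Q1 n) (linext_zmod _).
HB.instance Definition _ n := GRing.isZmodMorphism.Build (W n) (W n) (@Pop n) (linext_zmod _).
HB.instance Definition _ n := GRing.isZmodMorphism.Build (W n) (W n) (@exch n) (linext_zmod _).
HB.instance Definition _ n := GRing.isZmodMorphism.Build (W n) (W n.+1) (@xmul n) (linext_zmod _).
HB.instance Definition _ n := GRing.isZmodMorphism.Build (W n) (W n.+1) (@tmul n) (linext_zmod _).

Lemma linext_mono n m (g : {set 'I_n} -> W m) J : linext g (mono J) = g J.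
Proof.
apply/ffunP => K; rewrite ffunE (bigD1 J) //= big1 => [|I HI].
  by rewrite !ffunE eqxx mul1r addr0.
by rewrite ffunE (negbTE HI) mul0r.
Qed.

Lemma mono_decomp n (f : W n) : f = \sum_(I | f I != 0) mono I.
Proof.
apply/ffunP => K; rewrite sum_ffunE.
case: (F2_cases (f K)) => HK.
  rewrite HK big1 // => I HI; rewrite ffunE; case: eqP => // E; subst.
  by rewrite HK eqxx in HI.
rewrite HK (bigD1 K) /= ?HK ?oner_eq0 // big1 => [|I /andP [_ HI]].
  by rewrite ffunE eqxx addr0.
by rewrite ffunE eq_sym (negbTE HI).
Qed.

Lemma add_ext n m (A B : {additive W n -> W m}) :
  (forall I, A (mono I) = B (mono I)) -> forall f, A f = B f.
Proof.
move=> H f; rewrite (mono_decomp f) !raddf_sum; apply: eq_bigr => I _; exact: H.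
Qed.
Section Sets.
Variable n : nat.
Local Notation wid := (widen_ord (leqnSn n)).
Local Notation mx := (@ord_max n).

Lemma wid_inj : injective wid.
Proof. by move=> i j H; apply/val_inj; exact: (congr1 val H). Qed.

Lemma wid_neq_mx i : (wid i == mx) = false.
Proof. by rewrite -val_eqE /= ltn_eqF. Qed.

Lemma ord_split (j : 'I_n.+1) : j = mx \/ exists i, j = wid i.
Proof.
have [lt|ge] := ltnP j n.
  by right; exists (Ordinal lt); apply/val_inj.
by left; apply/val_inj => /=; apply/eqP; rewrite eqn_leq ge -ltnS ltn_ord.
Qed.

Lemma mem_incl i (I : {set 'I_n}) : (wid i \in incl I) = (i \in I).
Proof. by rewrite /incl mem_imset //; exact: wid_inj. Qed.

Lemma mx_incl (I : {set 'I_n}) : (mx \in incl I) = false.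
Proof. by apply/negbTE/imsetP => -[i _ /eqP]; rewrite eq_sym wid_neq_mx. Qed.

Lemma incl_inj : injective (@incl n).
Proof. exact: imset_inj wid_inj. Qed.

Lemma setC_incl (I : {set 'I_n}) : ~: incl I = mx |: incl (~: I).
Proof.
apply/setP => j; case: (ord_split j) => [->|[i ->]].
  by rewrite !(mx_incl, inE, eqxx).
by rewrite !(mem_incl, inE, wid_neq_mx).
Qed.

Lemma setC_tincl (I : {set 'I_n}) : ~: (mx |: incl I) = incl (~: I).
Proof.
apply/setP => j; case: (ord_split j) => [->|[i ->]].
  by rewrite !(mx_incl, inE, eqxx).
by rewrite !(mem_incl, inE, wid_neq_mx).
Qed.

Lemma inclU (A B : {set 'I_n}) : incl (A :|: B) = incl A :|: incl B.
Proof. exact: imsetU. Qed.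
Lemma inclU1 i (A : {set 'I_n}) : incl (i |: A) = wid i |: incl A.
Proof. exact: imsetU1. Qed.

Lemma incl_restr (K : {set 'I_n.+1}) : mx \notin K -> K = incl [set i | wid i \in K].
Proof.
move=> HK; apply/setP => j; case: (ord_split j) => [->|[i ->]].
  by rewrite mx_incl (negbTE HK).
by rewrite mem_incl inE.
Qed.

Lemma incl_sub (A B : {set 'I_n}) : (incl A \subset incl B) = (A \subset B).
Proof.
apply/subsetP/subsetP => H i.
  by move=> Hi; rewrite -mem_incl H // mem_incl.
by case/imsetP => k Hk ->; rewrite mem_incl H.
Qed.

Lemma card_incl (A : {set 'I_n}) : #|incl A| = #|A|.
Proof. by rewrite card_imset //; exact: wid_inj. Qed.

Lemma two_sets_incl (S : {set 'I_n}) (K : {set 'I_n.+1}) :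
  (K \subset incl S) && (#|K| == 2)%N =
  (K \in (@incl n) @: [set K' : {set 'I_n} | (K' \subset S) && (#|K'| == 2)%N]).
Proof.
apply/idP/imsetP.
  case/andP => Hs Hc.
  have HK : mx \notin K.
    by apply/negP => /(subsetP Hs); rewrite mx_incl.
  exists [set i | wid i \in K]; last exact: incl_restr.
  by rewrite inE -incl_sub -card_incl -incl_restr // Hs.
by case=> K'; rewrite inE => /andP [H1 H2] ->; rewrite incl_sub card_incl H1.
Qed.

Lemma two_sets_mx (I : {set 'I_n}) (K : {set 'I_n.+1}) :
  [&& (K \subset ~: incl I), (#|K| == 2)%N & (mx \in K)] =
  (K \in (fun i => [set mx; wid i]) @: (~: I)).
Proof.
apply/idP/imsetP.
  case/and3P => Hs Hc Hm.
  move: Hc; rewrite (cardsD1 mx) Hm add1n eqSS => /cards1P [k Hk].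
  have Hk1 : k \in K :\ mx by rewrite Hk set11.
  move: Hk1; rewrite !inE => /andP [Hkm HkK].
  case: (ord_split k) Hk Hkm HkK => [->|[i ->]]; first by rewrite eqxx.
  move=> Hk _ HiK; exists i.
    by move/(subsetP Hs): HiK; rewrite !inE mem_incl; apply.
  by rewrite -(setD1K Hm) Hk.
case=> i; rewrite inE => Hi ->; apply/and3P; split.
- apply/subsetP => j; rewrite !inE => /orP [] /eqP ->.
    by rewrite mx_incl.
  by rewrite mem_incl.
- by rewrite cards2 (eq_sym mx) wid_neq_mx.
- by rewrite !inE eqxx.
Qed.

Lemma pair_inj : injective (fun i => [set mx; wid i]).
Proof.
move=> i j /setP /(_ (wid i)); rewrite !inE eqxx orbT wid_neq_mx /=.
by move/esym/eqP/wid_inj.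
Qed.
End Sets.
Lemma Q1_mono n (I : {set 'I_n}) : Q1 (mono I) = \sum_(j in ~: I) mono (j |: I).
Proof. exact: linext_mono. Qed.
Lemma Pop_mono n (I : {set 'I_n}) : Pop (mono I) =
  \sum_(K : {set 'I_n} | (K \subset ~: I) && (#|K| == 2)%N) mono (K :|: I).
Proof. exact: linext_mono. Qed.
Lemma exch_mono n (I : {set 'I_n}) : exch (mono I) = mono (~: I).
Proof. exact: linext_mono. Qed.
Lemma xmul_mono n (I : {set 'I_n}) : xmul (mono I) = mono (incl I).
Proof. exact: linext_mono. Qed.
Lemma tmul_mono n (I : {set 'I_n}) : tmul (mono I) = mono (ord_max |: incl I).
Proof. exact: linext_mono. Qed.

Ltac decomp f := rewrite (mono_decomp f) !raddf_sum -?big_split /=; apply: eq_bigr => I _.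

Lemma Q1x n (f : W n) : Q1 (xmul f) = xmul (Q1 f) + tmul f.
Proof.
decomp f.
rewrite xmul_mono tmul_mono !Q1_mono setC_incl big_setU1 ?mx_incl //=.
rewrite big_imset /=; last exact: in2W (@wid_inj n).
rewrite raddf_sum /= addrC; congr (_ + _); apply: eq_bigr => i _.
by rewrite xmul_mono inclU1.
Qed.

Lemma Q1t n (f : W n) : Q1 (tmul f) = tmul (Q1 f).
Proof.
decomp f.
rewrite tmul_mono !Q1_mono setC_tincl big_imset /=; last exact: in2W (@wid_inj n).
rewrite raddf_sum /=; apply: eq_bigr => i _.
by rewrite tmul_mono inclU1 setUCA.
Qed.

Lemma Ex n (f : W n) : exch (xmul f) = tmul (exch f).
Proof. by decomp f; rewrite xmul_mono !exch_mono tmul_mono setC_incl. Qed.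

Lemma Et n (f : W n) : exch (tmul f) = xmul (exch f).
Proof. by decomp f; rewrite tmul_mono !exch_mono xmul_mono setC_tincl. Qed.

Lemma Pt n (f : W n) : Pop (tmul f) = tmul (Pop f).
Proof.
decomp f.
rewrite tmul_mono !Pop_mono setC_tincl raddf_sum /=.
rewrite (eq_bigl (fun K => K \in (@incl n) @: [set K' : {set 'I_n} | (K' \subset ~: I) && (#|K'| == 2)%N])); last first.
  by move=> K; rewrite two_sets_incl.
rewrite big_imset /=; last exact: in2W (@incl_inj n).
apply: eq_big => [K|K]; first by rewrite inE.
by rewrite inE => _; rewrite tmul_mono inclU setUCA.
Qed.

Lemma Px n (f : W n) : Pop (xmul f) = xmul (Pop f) + tmul (Q1 f).
Proof.
decomp f.
rewrite xmul_mono !Pop_mono Q1_mono !raddf_sum /=.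
rewrite (bigID (fun K : {set 'I_n.+1} => @ord_max n \in K)) /= addrC; congr (_ + _).
  rewrite (eq_bigl (fun K => K \in (@incl n) @: [set K' : {set 'I_n} | (K' \subset ~: I) && (#|K'| == 2)%N])); last first.
    move=> K; rewrite -two_sets_incl setC_incl; case HK: (ord_max \in K) => /=.
      rewrite andbF; symmetry; apply/negbTE/andP => -[/subsetP H _].
      by move: (H _ HK); rewrite mx_incl.
    rewrite andbT; congr (_ && _); apply/idP/idP => H; apply/subsetP => j Hj;
      move: (subsetP H j Hj); rewrite !inE.
      by case/orP => // /eqP E; rewrite E HK in Hj.
    by move=> ->; rewrite orbT.
  rewrite big_imset /=; last exact: in2W (@incl_inj n).
  apply: eq_big => [K|K]; first by rewrite inE.
  by rewrite inE => _; rewrite xmul_mono inclU.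
rewrite (eq_bigl (fun K => K \in (fun i => [set ord_max; widen_ord (leqnSn n) i]) @: (~: I))); last first.
  by move=> K; rewrite -two_sets_mx andbA.
rewrite big_imset /=; last exact: in2W (@pair_inj n).
apply: eq_bigr => i _.
by rewrite tmul_mono inclU1 setUA.
Qed.
Definition restr n (K : {set 'I_n.+1}) : {set 'I_n} := [set i | widen_ord (leqnSn n) i \in K].
Definition lo n (f : W n.+1) : W n := [ffun I => f (incl I)].
Definition hi n (f : W n.+1) : W n := [ffun I => f (ord_max |: incl I)].

Lemma restr_incl n (I : {set 'I_n}) : restr (incl I) = I.
Proof. by apply/setP => i; rewrite inE mem_incl. Qed.
Lemma restr_tincl n (I : {set 'I_n}) : restr (ord_max |: incl I) = I.
Proof. by apply/setP => i; rewrite !inE wid_neq_mx mem_incl. Qed.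
Lemma tincl_restr n (K : {set 'I_n.+1}) : ord_max \in K -> K = ord_max |: incl (restr K).
Proof.
move=> HK; apply/setP => j; case: (ord_split j) => [->|[i ->]].
  by rewrite !inE eqxx HK.
by rewrite !inE wid_neq_mx mem_incl inE.
Qed.

Lemma xmulE n (a : W n) K : xmul a K = if ord_max \in K then 0 else a (restr K).
Proof.
rewrite ffunE; case: ifP => HK.
  rewrite big1 // => I _; rewrite ffunE; case: eqP => [E|]; last by rewrite mulr0.
  by rewrite E mx_incl in HK.
rewrite (bigD1 (restr K)) //= big1 => [|I HI].
  by rewrite ffunE -incl_restr ?HK // eqxx mulr1 addr0.
rewrite ffunE; case: eqP => [E|]; last by rewrite mulr0.
by rewrite E restr_incl eqxx in HI.
Qed.

Lemma tmulE n (c : W n) K : tmul c K = if ord_max \in K then c (restr K) else 0.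
Proof.
rewrite ffunE; case: ifP => HK; last first.
  rewrite big1 // => I _; rewrite ffunE; case: eqP => [E|]; last by rewrite mulr0.
  by rewrite E setU11 in HK.
rewrite (bigD1 (restr K)) //= big1 => [|I HI].
  by rewrite ffunE -tincl_restr ?HK // eqxx mulr1 addr0.
rewrite ffunE; case: eqP => [E|]; last by rewrite mulr0.
by rewrite E restr_tincl eqxx in HI.
Qed.

Lemma decomp_xt n (f : W n.+1) : f = xmul (lo f) + tmul (hi f).
Proof.
apply/ffunP => K; rewrite ffunE (xmulE (lo f) K) (tmulE (hi f) K) !ffunE.
case: ifP => HK; first by rewrite add0r -tincl_restr.
by rewrite addr0 -incl_restr ?HK.
Qed.

Lemma lo_x n (a : W n) : lo (xmul a) = a.
Proof. by apply/ffunP => I; rewrite ffunE xmulE mx_incl restr_incl. Qed.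
Lemma hi_x n (a : W n) : hi (xmul a) = 0.
Proof. by apply/ffunP => I; rewrite ffunE xmulE setU11 ffunE. Qed.
Lemma lo_t n (a : W n) : lo (tmul a) = 0.
Proof. by apply/ffunP => I; rewrite ffunE tmulE mx_incl ffunE. Qed.
Lemma hi_t n (a : W n) : hi (tmul a) = a.
Proof. by apply/ffunP => I; rewrite ffunE tmulE setU11 restr_tincl. Qed.
Lemma lo_add n (f g : W n.+1) : lo (f + g) = lo f + lo g.
Proof. by apply/ffunP => I; rewrite !ffunE. Qed.
Lemma hi_add n (f g : W n.+1) : hi (f + g) = hi f + hi g.
Proof. by apply/ffunP => I; rewrite !ffunE. Qed.

Lemma xt_eq n (a c a' c' : W n) : xmul a + tmul c = xmul a' + tmul c' -> a = a' /\ c = c'.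
Proof.
move=> E; split.
  by move: (congr1 (@lo n) E); rewrite !lo_add !lo_x !lo_t !addr0.
by move: (congr1 (@hi n) E); rewrite !hi_add !hi_x !hi_t !add0r.
Qed.

Lemma xt_eq0 n (a c : W n) : xmul a + tmul c = 0 -> a = 0 /\ c = 0.
Proof. by move=> E; apply: xt_eq; rewrite E !raddf0 addr0. Qed.

Lemma xmul_inj n : injective (@xmul n).
Proof. by move=> a b E; case: (@xt_eq n a 0 b 0); rewrite // !raddf0 !addr0. Qed.
Lemma tmul_inj n : injective (@tmul n).
Proof. by move=> a b E; case: (@xt_eq n 0 a 0 b); rewrite // !raddf0 !add0r. Qed.
Definition Qp n (f : W n) : W n := exch (Q1 (exch f)).
Lemma Qp_zmod n : zmod_morphism (@Qp n).
Proof. by move=> u v; rewrite /Qp !raddfB. Qed.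
HB.instance Definition _ n := GRing.isZmodMorphism.Build (W n) (W n) (@Qp n) (@Qp_zmod n).

Lemma EE n (f : W n) : exch (exch f) = f.
Proof. by decomp f; rewrite !exch_mono setCK. Qed.

Lemma Q1_0 (f : W 0) : Q1 f = 0.
Proof.
rewrite (mono_decomp f) raddf_sum big1 // => I _ /=.
by rewrite Q1_mono big1 // => -[].
Qed.
Lemma Pop_0 (f : W 0) : Pop f = 0.
Proof.
rewrite (mono_decomp f) raddf_sum big1 // => I _ /=.
rewrite Pop_mono big_pred0 // => K.
have: (#|K| <= 0)%N by move: (max_card K); rewrite card_ord.
by rewrite leqn0 => /eqP ->; rewrite andbF.
Qed.

Lemma Qpx n (a : W n) : Qp (xmul a) = xmul (Qp a).
Proof. by rewrite /Qp; rewrite Ex Q1t Et. Qed.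
Lemma Qpt n (c : W n) : Qp (tmul c) = xmul c + tmul (Qp c).
Proof. by rewrite /Qp; rewrite Et Q1x raddfD /= Ex Et EE addrC. Qed.

Lemma addWE n (f g : W n) K : (f + g) K = f K + g K.
Proof. by rewrite ffunE. Qed.
Lemma zeroWE n K : (0 : W n) K = 0.
Proof. by rewrite ffunE. Qed.
Lemma two0 : 2%:R = 0 :> 'F_2. Proof. exact: (mulrn_pchar (pchar_Fp _) 1). Qed.
Ltac f2close := repeat (rewrite ?addr0 ?add0r ?F2_addxx); done.
Ltac f2 := let K := fresh "K" in
  apply/ffunP => K; rewrite ?addWE ?zeroWE;
  repeat match goal with |- context [ @fun_of_fin ?A ?B ?C ?X K ] =>
    let a := fresh "a" in set a := (@fun_of_fin A B C X K); clearbody a;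
    case: (F2_cases a) => -> end;
  f2close.

Lemma Q1D n (u v : W n) : Q1 (u + v) = Q1 u + Q1 v. Proof. exact: raddfD. Qed.
Lemma PopD n (u v : W n) : Pop (u + v) = Pop u + Pop v. Proof. exact: raddfD. Qed.
Lemma exchD n (u v : W n) : exch (u + v) = exch u + exch v. Proof. exact: raddfD. Qed.
Lemma QpD n (u v : W n) : Qp (u + v) = Qp u + Qp v. Proof. exact: raddfD. Qed.
Lemma xmulD n (u v : W n) : xmul (u + v) = xmul u + xmul v. Proof. exact: raddfD. Qed.
Lemma tmulD n (u v : W n) : tmul (u + v) = tmul u + tmul v. Proof. exact: raddfD. Qed.
Lemma Q10 n : Q1 (0 : W n) = 0. Proof. exact: raddf0. Qed.
Lemma Pop0 n : Pop (0 : W n) = 0. Proof. exact: raddf0. Qed.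
Lemma exch0 n : exch (0 : W n) = 0. Proof. exact: raddf0. Qed.
Lemma Qp0 n : Qp (0 : W n) = 0. Proof. exact: raddf0. Qed.
Lemma xmul0 n : xmul (0 : W n) = 0. Proof. exact: raddf0. Qed.
Lemma tmul0 n : tmul (0 : W n) = 0. Proof. exact: raddf0. Qed.
Ltac norm := rewrite ?(Q1D, PopD, exchD, QpD, xmulD, tmulD, Q10, Pop0, exch0, Qp0, xmul0, tmul0,
   Q1x, Q1t, Px, Pt, Ex, Et, Qpx, Qpt, EE).

Lemma QQ n (f : W n) : Q1 (Q1 f) = 0.
Proof.
elim: n f => [|n IH] f; first by rewrite Q1_0.
rewrite (decomp_xt f); norm; rewrite !IH; norm.
f2.
Qed.

Lemma PQ n (f : W n) : Pop (Q1 f) = Q1 (Pop f).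
Proof.
elim: n f => [|n IH] f; first by rewrite Pop_0 Q1_0 ?raddf0.
rewrite (decomp_xt f); norm; rewrite !IH !QQ; norm.
f2.
Qed.

Lemma Kid n (f : W n) : Q1 (Qp f) + Qp (Q1 f) = if odd n then f else 0.
Proof.
elim: n f => [|n IH] f.
  by rewrite /Qp !Q1_0 ?raddf0 addr0.
rewrite (decomp_xt f); set a := lo f; set c := hi f.
norm.
have Ha := IH a; have Hc := IH c.
transitivity (xmul (Q1 (Qp a) + Qp (Q1 a) + a) + tmul (Q1 (Qp c) + Qp (Q1 c) + c)).
  norm; f2.
rewrite Ha Hc /=; case: (odd n) => /=; norm; f2.
Qed.
Definition J n (z : W n) : Prop :=
  [/\ Pop z = 0, Pop (exch z) = 0, Q1 z = Pop (Qp z),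
      Q1 (exch z) = Pop (Qp (exch z)) & z + exch z = Q1 (Qp z)].

Lemma eqW_add n (u v : W n) : u + v = 0 -> u = v.
Proof. by move/eqP; rewrite addW_eq => /eqP. Qed.

Lemma QQp_even n (z : W n) : ~~ odd n -> Q1 (Qp z) = Qp (Q1 z).
Proof. by move=> Hn; apply: eqW_add; rewrite Kid (negbTE Hn). Qed.

Lemma QpQp n (z : W n) : Qp (Qp z) = 0.
Proof. by rewrite /Qp EE QQ exch0. Qed.

Lemma J_exch n (z : W n) : ~~ odd n -> J z -> J (exch z).
Proof.
move=> Hn [h1 h2 h3 h4 h5]; split; rewrite ?EE //.
transitivity (exch (Q1 (Qp z))); first by rewrite -h5 exchD EE addrC.
by rewrite [RHS]QQp_even.
Qed.

Lemma J_step n (b : W n) : ~~ odd n -> J b -> J (xmul (Q1 (xmul b))).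
Proof.
move=> Hn [hP hPE hQ hQE hE].
have F1 : Pop (Q1 b) = 0 by rewrite PQ hP Q10.
have F3 : Qp (Q1 b) = Q1 (Qp b) by rewrite QQp_even.
have F4 : Pop (Q1 (Qp b)) = 0 by rewrite PQ -hQ QQ.
have F6 : exch b = b + Q1 (Qp b) by rewrite -hE addrA addxx add0r.
have F5 : Q1 (exch b) = Q1 b by rewrite F6 Q1D QQ addr0.
have F8 : exch (Q1 b) = Qp b by rewrite /Qp F5.
have G3 : forall z : W n, Qp (Q1 z) = Q1 (Qp z) by move=> z; rewrite QQp_even.
split; do 3 (norm; rewrite ?F8 ?F6; norm; rewrite ?QQ ?QpQp ?PQ ?G3 ?hP -?hQ); norm; f2.
Qed.
Section Hom.
Variable n : nat.
Implicit Types (S A B : {set W n}) (z : W n).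

Definition hom S z := exists2 A : {set W n}, A \subset S & exists y, z = \sum_(b in A) b + Pop y.

Lemma sum_symdiff A B :
  \sum_(b in A) b + \sum_(b in B) b = \sum_(b in (A :\: B) :|: (B :\: A)) b.
Proof.
rewrite (big_setID (A := A) B) (big_setID (A := B) A) setIC.
rewrite [RHS](big_setID (A :\: B)).
have -> : ((A :\: B) :|: (B :\: A)) :&: (A :\: B) = A :\: B.
  by apply/setP => x; rewrite !inE; case: (x \in A); case: (x \in B).
have -> : ((A :\: B) :|: (B :\: A)) :\: (A :\: B) = B :\: A.
  by apply/setP => x; rewrite !inE; case: (x \in A); case: (x \in B).
by rewrite addrACA addxx add0r.
Qed.

Lemma hom0 S : hom S 0.
Proof. by exists set0; rewrite ?sub0set //; exists 0; rewrite big_set0 Pop0 addr0. Qed.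

Lemma homD S z1 z2 : hom S z1 -> hom S z2 -> hom S (z1 + z2).
Proof.
move=> [A1 H1 [y1 ->]] [A2 H2 [y2 ->]].
exists ((A1 :\: A2) :|: (A2 :\: A1)).
  by rewrite subUset !(subset_trans (subsetDl _ _)).
exists (y1 + y2); rewrite PopD -sum_symdiff.
by rewrite addrACA.
Qed.

Lemma homS S z : z \in S -> hom S z.
Proof.
move=> Hz; exists [set z]; first by rewrite sub1set.
by exists 0; rewrite big_set1 Pop0 addr0.
Qed.

Lemma homP S y : hom S (Pop y).
Proof. by exists set0; rewrite ?sub0set //; exists y; rewrite big_set0 add0r. Qed.

Lemma hom_sum S (T : finType) (C : {set T}) (F : T -> W n) :
  (forall i, i \in C -> hom S (F i)) -> hom S (\sum_(i in C) F i).
Proof.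
move=> H; apply: (big_rec (hom S)); first exact: hom0.
by move=> i x Hi Hx; apply: homD => //; exact: H.
Qed.

Lemma preim (T : finType) (g : T -> W n) (C : {set T}) A :
  A \subset g @: C -> A = g @: [set b in C | g b \in A].
Proof.
move=> HA; apply/setP => y; apply/idP/imsetP.
  move=> Hy; case/imsetP: (subsetP HA y Hy) => b Hb Hyb.
  by exists b; rewrite // inE Hb -Hyb Hy.
by case=> b; rewrite inE => /andP [_ Hb] ->.
Qed.
End Hom.
Lemma lo_zmod n : zmod_morphism (@lo n).
Proof. by move=> u v; apply/ffunP => I; rewrite !ffunE. Qed.
HB.instance Definition _ n := GRing.isZmodMorphism.Build (W n.+1) (W n) (@lo n) (@lo_zmod n).
Lemma hi_zmod n : zmod_morphism (@hi n).
Proof. by move=> u v; apply/ffunP => I; rewrite !ffunE. Qed.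
HB.instance Definition _ n := GRing.isZmodMorphism.Build (W n.+1) (W n) (@hi n) (@hi_zmod n).

Lemma PP n (f : W n) : Pop (Pop f) = 0.
Proof.
elim: n f => [|n IH] f; first by rewrite Pop_0.
rewrite (decomp_xt f); norm; rewrite !IH PQ; norm; f2.
Qed.

Lemma g1_cyc n (b : W n) : J b -> Pop (Q1 (xmul b)) = 0.
Proof. by case=> hP _ _ _ _; norm; rewrite PQ hP QQ; norm; f2. Qed.

Lemma g2_cyc n (b : W n) : J b -> Pop (exch (Q1 (xmul b))) = 0.
Proof.
case=> hP hPE hQ hQE hE.
have hQE' : Q1 (exch b) = Pop (exch (Q1 b)) by rewrite hQE /Qp EE.
by norm; rewrite hPE -hQE'; norm; f2.
Qed.

Lemma tmul_hom n (b : W n) : ~~ odd n -> J b ->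
  tmul b = Q1 (xmul (exch b)) + Pop (xmul (Qp (exch b))).
Proof.
move=> Hn Jb; case: (J_exch Hn Jb) => h1 h2 h3 h4 h5.
rewrite EE in h5.
norm; rewrite -h3 -h5; norm; f2.
Qed.

Lemma loP n (w : W n.+1) : lo (Pop w) = Pop (lo w).
Proof. by rewrite {1}(decomp_xt w); norm; rewrite !lo_add !lo_x !lo_t; f2. Qed.
Lemma hiP n (w : W n.+1) : hi (Pop w) = Q1 (lo w) + Pop (hi w).
Proof. by rewrite {1}(decomp_xt w); norm; rewrite !hi_add !hi_x !hi_t; f2. Qed.
Lemma lo_g1 n (b : W n) : lo (Q1 (xmul b)) = Q1 b.
Proof. by norm; rewrite lo_add lo_x lo_t; f2. Qed.
Lemma hi_g1 n (b : W n) : hi (Q1 (xmul b)) = b.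
Proof. by norm; rewrite hi_add hi_x hi_t; f2. Qed.
Lemma lo_g2 n (b : W n) : lo (exch (Q1 (xmul b))) = exch b.
Proof. by norm; rewrite lo_add lo_x lo_t; f2. Qed.
Lemma ch2_move n (a b c : W n) : a + b = c -> b = c + a.
Proof. by move=> <-; f2. Qed.
Lemma exch_inj n : injective (@exch n).
Proof. by move=> u v /(congr1 (@exch n)); rewrite !EE. Qed.

Lemma indep_img n (B : {set W n}) (C : {set W n}) y :
  margolis_basis B -> C \subset B -> (forall b, b \in B -> exch b \in B) ->
  \sum_(b in C) exch b = Pop y -> C = set0.
Proof.
move=> [_ _ Hind] HC HE Hs.
have : (@exch n) @: C = set0.
  apply: Hind; last by exists y; rewrite big_imset //= ; exact: in2W (@exch_inj n).
  by apply/subsetP => x /imsetP [b Hb ->]; apply: HE; exact: (subsetP HC).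
by move/eqP; rewrite imset_eq0 => /eqP.
Qed.

Lemma odd_step n (B : {set W n}) : ~~ odd n -> margolis_basis B ->
  (forall b, b \in B -> J b) -> (forall b, b \in B -> exch b \in B) ->
  margolis_basis ([set Q1 (xmul b) | b in B] :|: [set exch (Q1 (xmul b)) | b in B]).
Proof.
move=> Hn HB HJ HE; case: (HB) => Hcyc Hspan Hind.
set S := _ :|: _.
have HS1 b : b \in B -> Q1 (xmul b) \in S.
  by move=> Hb; rewrite inE; apply/orP; left; apply: imset_f.
have HS2 b : b \in B -> exch (Q1 (xmul b)) \in S.
  by move=> Hb; rewrite inE; apply/orP; right; apply: imset_f.
have Scyc : forall y, y \in S -> Pop y = 0.
  move=> y; rewrite inE => /orP [] /imsetP [b Hb ->].
    exact: g1_cyc (HJ b Hb).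
  exact: g2_cyc (HJ b Hb).
split => //.
- move=> z Hz.
  have E0 : xmul (Pop (lo z)) + tmul (Q1 (lo z) + Pop (hi z)) = Pop (xmul (lo z) + tmul (hi z)).
    by norm; f2.
  rewrite -decomp_xt Hz in E0; case: (xt_eq0 E0) => Ha _.
  case: (Hspan _ Ha) => A1 HA1 [a' Ea].
  pose X := \sum_(b in A1) exch (Q1 (xmul (exch b))) + Pop (xmul a').
  have HX : hom S X.
    apply: homD; last exact: homP.
    apply: hom_sum => b Hb; apply: homS; apply: HS2; apply: HE; exact: (subsetP HA1).
  have Hlo : lo (z + X) = 0.
    rewrite raddfD /= Ea raddfD /= raddf_sum /=.
    have -> : \sum_(i in A1) lo (exch (Q1 (xmul (exch i)))) = \sum_(i in A1) i.
      by apply: eq_bigr => b _; norm; rewrite lo_add lo_x lo_t add0r.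
    by rewrite Px lo_add lo_x lo_t; f2.
  have Hcz : Pop (z + X) = 0.
    rewrite PopD Hz add0r PopD PP addr0 raddf_sum big1 // => b Hb /=.
    apply: g2_cyc; apply: HJ; apply: HE; exact: (subsetP HA1).
  have Ez : z + X = tmul (hi (z + X)) by rewrite {1}(decomp_xt (z + X)) Hlo xmul0 add0r.
  have Hc : Pop (hi (z + X)) = 0.
    by apply: tmul_inj; rewrite -Pt -Ez Hcz tmul0.
  case: (Hspan _ Hc) => C HC [c'' Ec].
  have -> : z = (z + X) + X by rewrite -addrA addxx addr0.
  apply: homD => //.
  rewrite Ez Ec tmulD raddf_sum /=; apply: homD; last by rewrite -Pt; exact: homP.
  apply: hom_sum => b Hb.
  have HbB : b \in B by exact: (subsetP HC).
  rewrite (tmul_hom Hn (HJ b HbB)); apply: homD; last exact: homP.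
  by apply: homS; apply: HS1; apply: HE.
- move=> A HA [w Hw].
  set F1 := [set Q1 (xmul b) | b in B].
  set B1 := [set b in B | Q1 (xmul b) \in A :&: F1].
  set B2 := [set b in B | exch (Q1 (xmul b)) \in A :\: F1].
  have E1 : A :&: F1 = [set Q1 (xmul b) | b in B1].
    by apply: preim; rewrite subsetIr.
  have E2 : A :\: F1 = [set exch (Q1 (xmul b)) | b in B2].
    apply: preim; apply/subsetP => y; rewrite inE => /andP [Hy1 Hy].
    move: (subsetP HA y Hy); rewrite inE (negbTE Hy1) /=; done.
  have HB1 : B1 \subset B by apply/subsetP => b; rewrite inE => /andP [].
  have HB2 : B2 \subset B by apply/subsetP => b; rewrite inE => /andP [].
  move: Hw; rewrite (big_setID (A := A) F1) E1 E2.
  rewrite big_imset /=; last by move=> b1 b2 _ _ /(congr1 (@hi n)); rewrite !hi_g1.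
  rewrite big_imset /=; last by move=> b1 b2 _ _ /(congr1 (@lo n)); rewrite !lo_g2 => /exch_inj.
  move=> Hw.
  have Hlo := congr1 (@lo n) Hw; have Hhi := congr1 (@hi n) Hw.
  rewrite raddfD /= !raddf_sum /= loP in Hlo.
  rewrite raddfD /= !raddf_sum /= hiP in Hhi.
  have eq1 : \sum_(b in B1) lo (Q1 (xmul b)) = Pop (\sum_(b in B1) Qp b).
    rewrite raddf_sum; apply: eq_bigr => b Hb /=.
    by rewrite lo_g1; case: (HJ b (subsetP HB1 b Hb)).
  have eq2 : \sum_(b in B2) lo (exch (Q1 (xmul b))) = \sum_(b in B2) exch b.
    by apply: eq_bigr => b _; rewrite lo_g2.
  rewrite eq1 eq2 in Hlo.
  have B2e : B2 = set0.
    apply: (indep_img (y := lo w + \sum_(b in B1) Qp b) HB) => //.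
    by rewrite PopD (ch2_move Hlo) addrC.
  rewrite B2e big_set0 in Hlo; rewrite B2e big_set0 in Hhi.
  set sQp := \sum_(b in B1) Qp b in Hlo eq1.
  have eq3 : \sum_(b in B1) hi (Q1 (xmul b)) = \sum_(b in B1) b.
    by apply: eq_bigr => b _; rewrite hi_g1.
  rewrite eq3 in Hhi.
  have Hhi' : \sum_(b in B1) b = Q1 (lo w) + Pop (hi w) by rewrite -Hhi; f2.
  have Hv : Pop (lo w + sQp) = 0.
    by rewrite PopD -Hlo; f2.
  case: (Hspan _ Hv) => Cs HCs [v' Ev].
  have H1 : Q1 (lo w + sQp) = Pop (\sum_(c in Cs) Qp c + Q1 v').
    rewrite Ev Q1D PopD raddf_sum [Pop (\sum_(c in Cs) _)]raddf_sum -PQ; congr (_ + _).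
    by apply: eq_bigr => c Hc /=; case: (HJ c (subsetP HCs c Hc)) => _ _ -> _ _.
  have H2 : Q1 sQp = \sum_(b in B1) b + \sum_(b in B1) exch b.
    rewrite raddf_sum -big_split; apply: eq_bigr => b Hb /=.
    by case: (HJ b (subsetP HB1 b Hb)) => _ _ _ _ ->.
  have B1e : B1 = set0.
    apply: (indep_img (y := \sum_(c in Cs) Qp c + Q1 v' + hi w) HB) => //.
    rewrite PopD -H1 Q1D (ch2_move (esym H2)) Hhi'; f2.
  apply/setP => x; rewrite inE; apply/negbTE/negP => Hx.
  case: (boolP (x \in F1)) => Hf.
    have : x \in A :&: F1 by rewrite inE Hx Hf.
    by rewrite E1 B1e imset0 inE.
  have : x \in A :\: F1 by rewrite inE Hx Hf.
  by rewrite E2 B2e imset0 inE.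
Qed.
Lemma Qg2 n (b : W n) : ~~ odd n -> J b -> Q1 (exch (Q1 (xmul b))) = Q1 (xmul b).
Proof.
move=> Hn [hP hPE hQ hQE hE].
have F6 : exch b = b + Q1 (Qp b) by rewrite -hE addrA addxx add0r.
have F5 : Q1 (exch b) = Q1 b by rewrite F6 Q1D QQ addr0.
have F8 : exch (Q1 b) = Qp b by rewrite /Qp F5.
norm; rewrite F8 F5 -hE; norm; f2.
Qed.

Lemma basis_nz n (B : {set W n}) b : margolis_basis B -> b \in B -> b != 0.
Proof.
case=> _ _ Hind Hb; apply/eqP => E.
have : [set b] = set0.
  by apply: Hind; [rewrite sub1set | exists 0; rewrite big_set1 E Pop0].
by move/setP/(_ b); rewrite !inE eqxx.
Qed.

Lemma even_step n (B : {set W n}) : ~~ odd n -> margolis_basis B ->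
  (forall b, b \in B -> J b) -> (forall b, b \in B -> exch b \in B) ->
  margolis_basis ([set xmul (Q1 (xmul b)) | b in B] :|: [set tmul (exch (Q1 (xmul b))) | b in B]).
Proof.
move=> Hn HB HJ HE.
have HS := odd_step Hn HB HJ HE.
case: (HS) => Scyc Sspan Sind.
set F1 := [set Q1 (@xmul n b) | b in B].
set F2 := [set exch (Q1 (@xmul n b)) | b in B].
set S := F1 :|: F2.
have QF1 : forall y, y \in F1 -> Q1 y = 0.
  by move=> y /imsetP [b _ ->]; rewrite QQ.
have QF2 : forall y, y \in F2 -> Q1 y \in F1.
  by move=> y /imsetP [b Hb ->]; rewrite Qg2 //; [apply: imset_f | exact: HJ].
have QF2inj : {in F2 &, injective (@Q1 n.+1)}.
  move=> y1 y2 /imsetP [b1 Hb1 ->] /imsetP [b2 Hb2 ->].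
  rewrite !Qg2 //; try exact: HJ.
  by move/(congr1 (@hi n)); rewrite !hi_g1 => ->.
have F12 : forall y, y \in F1 -> y \in F2 -> False.
  move=> y Hy1 Hy2; have := QF1 y Hy1.
  case/imsetP: Hy2 => b Hb Ey; rewrite Ey Qg2 //; last exact: HJ.
  move/(congr1 (@hi n)); rewrite hi_g1 => /eqP.
  by rewrite raddf0 (negbTE (basis_nz HB Hb)).
have sumQ : forall Y : {set W n.+1}, Y \subset S ->
    \sum_(y in Y) Q1 y = \sum_(x in (@Q1 n.+1) @: (Y :&: F2)) x.
  move=> Y HY; rewrite (big_setID (A := Y) F2) /=.
  have -> : \sum_(y in Y :\: F2) Q1 y = 0.
    apply: big1 => y; rewrite inE => /andP [Hy2 HY']; apply: QF1.
    by move: (subsetP HY y HY'); rewrite inE (negbTE Hy2) orbF.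
  rewrite addr0 big_imset //.
  by move=> y1 y2; rewrite !inE => /andP [_ H1] /andP [_ H2]; exact: QF2inj.
have sumQsub : forall Y : {set W n.+1}, (@Q1 n.+1) @: (Y :&: F2) \subset S.
  move=> Y; apply/subsetP => x /imsetP [y]; rewrite inE => /andP [_ Hy] ->.
  by rewrite inE QF2.
set T1 := [set xmul (Q1 (@xmul n b)) | b in B].
set T2 := [set tmul (exch (Q1 (@xmul n b))) | b in B].
have HT1 b : b \in B -> xmul (Q1 (xmul b)) \in T1 :|: T2.
  by move=> Hb; rewrite inE; apply/orP; left; apply: imset_f.
have HT2 b : b \in B -> tmul (exch (Q1 (xmul b))) \in T1 :|: T2.
  by move=> Hb; rewrite inE; apply/orP; right; apply: imset_f.
have Tcyc1 b : b \in B -> Pop (xmul (Q1 (xmul b))) = 0.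
  by move=> Hb; rewrite Px (g1_cyc (HJ b Hb)) QQ; norm; f2.
have Tcyc : forall y, y \in T1 :|: T2 -> Pop y = 0.
  move=> y; rewrite inE => /orP [] /imsetP [b Hb ->]; first exact: Tcyc1.
  by rewrite Pt (g2_cyc (HJ b Hb)) tmul0.
split => //.
- move=> z Hz.
  have E0 : xmul (Pop (lo z)) + tmul (Q1 (lo z) + Pop (hi z)) = Pop (xmul (lo z) + tmul (hi z)).
    by norm; f2.
  rewrite -decomp_xt Hz in E0; case: (xt_eq0 E0) => Ha Hc0.
  case: (Sspan _ Ha) => Y HY [a' Ea].
  have HYF2 : Y :&: F2 = set0.
    have : (@Q1 n.+1) @: (Y :&: F2) = set0.
      apply: Sind; first exact: sumQsub.
      exists (hi z + Q1 a'); rewrite -sumQ //.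
      have e1 := congr1 (@Q1 n.+1) Ea; rewrite Q1D raddf_sum /= -PQ in e1.
      rewrite PopD -(eqW_add Hc0) e1; f2.
    by move/eqP; rewrite imset_eq0 => /eqP.
  have HY1 : Y \subset F1.
    apply/subsetP => y Hy; move: (subsetP HY y Hy); rewrite inE => /orP [] // Hy2.
    have : y \in Y :&: F2 by rewrite inE Hy Hy2.
    by rewrite HYF2 inE.
  pose X := \sum_(y in Y) xmul y + Pop (xmul a').
  have HX : hom (T1 :|: T2) X.
    apply: homD; last exact: homP.
    apply: hom_sum => y Hy; apply: homS.
    by case/imsetP: (subsetP HY1 y Hy) => b Hb ->; apply: HT1.
  have Hlo : lo (z + X) = 0.
    rewrite raddfD /= raddfD /= raddf_sum /= loP lo_x.
    under eq_bigr do rewrite lo_x.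
    by rewrite Ea; f2.
  have Hcz : Pop (z + X) = 0.
    rewrite PopD Hz add0r PopD PP addr0 raddf_sum big1 // => y Hy /=.
    by case/imsetP: (subsetP HY1 y Hy) => b Hb ->; apply: Tcyc1.
  have Ez : z + X = tmul (hi (z + X)) by rewrite {1}(decomp_xt (z + X)) Hlo xmul0 add0r.
  have Hc : Pop (hi (z + X)) = 0.
    by apply: tmul_inj; rewrite -Pt -Ez Hcz tmul0.
  case: (Sspan _ Hc) => Z HZ [c'' Ec].
  have -> : z = (z + X) + X by rewrite -addrA addxx addr0.
  apply: homD => //.
  rewrite Ez Ec tmulD raddf_sum /=; apply: homD; last by rewrite -Pt; exact: homP.
  apply: hom_sum => y Hy.
  move: (subsetP HZ y Hy); rewrite inE => /orP [] /imsetP [b Hb ->].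
    have -> : tmul (Q1 (xmul b)) = Pop (xmul (exch (Q1 (xmul b)))).
      by rewrite Px (g2_cyc (HJ b Hb)) (Qg2 Hn (HJ b Hb)); norm; f2.
    exact: homP.
  by apply: homS; apply: HT2.
- move=> A HA [w Hw].
  set B1 := [set b in B | xmul (Q1 (xmul b)) \in A :&: T1].
  set B2 := [set b in B | tmul (exch (Q1 (xmul b))) \in A :\: T1].
  have E1 : A :&: T1 = [set xmul (Q1 (xmul b)) | b in B1].
    by apply: preim; rewrite subsetIr.
  have E2 : A :\: T1 = [set tmul (exch (Q1 (xmul b))) | b in B2].
    apply: preim; apply/subsetP => y; rewrite inE => /andP [Hy1 Hy].
    by move: (subsetP HA y Hy); rewrite inE (negbTE Hy1) /=.
  have HB1 : B1 \subset B by apply/subsetP => b; rewrite inE => /andP [].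
  have HB2 : B2 \subset B by apply/subsetP => b; rewrite inE => /andP [].
  move: Hw; rewrite (big_setID (A := A) T1) /= E1 E2.
  rewrite big_imset /=; last first.
    by move=> b1 b2 _ _ /(congr1 (@lo n.+1)); rewrite !lo_x => /(congr1 (@hi n)); rewrite !hi_g1.
  rewrite big_imset /=; last first.
    by move=> b1 b2 _ _ /(congr1 (@hi n.+1)); rewrite !hi_t => /(congr1 (@lo n)); rewrite !lo_g2 => /exch_inj.
  move=> Hw.
  have Hlo := congr1 (@lo n.+1) Hw; have Hhi := congr1 (@hi n.+1) Hw.
  rewrite raddfD /= !raddf_sum /= loP in Hlo.
  rewrite raddfD /= !raddf_sum /= hiP in Hhi.
  have eq1 : \sum_(b in B1) lo (xmul (Q1 (xmul b))) = \sum_(b in B1) Q1 (xmul b).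
    by apply: eq_bigr => b _; rewrite lo_x.
  have eq2 : \sum_(b in B2) lo (tmul (exch (Q1 (xmul b)))) = 0.
    by apply: big1 => b _; rewrite lo_t.
  rewrite eq1 eq2 in Hlo.
  have B1e : B1 = set0.
    have : [set Q1 (@xmul n b) | b in B1] = set0.
      apply: Sind.
        apply/subsetP => y /imsetP [b Hb ->]; rewrite inE; apply/orP; left.
        by apply: imset_f; exact: (subsetP HB1).
      exists (lo w); rewrite big_imset /=; first by rewrite -Hlo; f2.
      by move=> b1 b2 _ _ /(congr1 (@hi n)); rewrite !hi_g1.
    by move/eqP; rewrite imset_eq0 => /eqP.
  rewrite B1e big_set0 in Hlo; rewrite B1e big_set0 in Hhi.
  have eq3 : \sum_(b in B2) hi (tmul (exch (Q1 (xmul b)))) = \sum_(b in B2) exch (Q1 (xmul b)).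
    by apply: eq_bigr => b _; rewrite hi_t.
  rewrite eq3 in Hhi.
  have HPlo : Pop (lo w) = 0 by rewrite -Hlo; f2.
  case: (Sspan _ HPlo) => Y HY [v Ev].
  set P := [set exch (Q1 (@xmul n b)) | b in B2].
  set D := (@Q1 n.+1) @: (Y :&: F2).
  have HP : P \subset S.
    apply/subsetP => y /imsetP [b Hb ->]; rewrite inE; apply/orP; right.
    by apply: imset_f; exact: (subsetP HB2).
  have HPD : (P :\: D) :|: (D :\: P) = set0.
    apply: Sind.
      by rewrite subUset !(subset_trans (subsetDl _ _)) // sumQsub.
    exists (hi w + Q1 v).
    rewrite -sum_symdiff big_imset /=; last first.
      by move=> b1 b2 _ _ /(congr1 (@lo n)); rewrite !lo_g2 => /exch_inj.
    rewrite -sumQ //.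
    have e1 := congr1 (@Q1 n.+1) Ev; rewrite Q1D raddf_sum /= -PQ in e1.
    have Hhi' : \sum_(b in B2) exch (Q1 (xmul b)) = Q1 (lo w) + Pop (hi w) by rewrite -Hhi; f2.
    rewrite Hhi' e1 PopD; f2.
  have Pe : P = set0.
    apply/setP => x; rewrite inE; apply/negbTE/negP => Hx.
    case: (boolP (x \in D)) => HxD.
      case/imsetP: HxD => y; rewrite inE => /andP [_ Hy2] Ex.
      apply: (F12 x); first by rewrite Ex; apply: QF2.
      by case/imsetP: Hx => b Hb ->; apply: imset_f; exact: (subsetP HB2).
    have : x \in (P :\: D) :|: (D :\: P) by rewrite !inE Hx HxD.
    by rewrite HPD inE.
  have B2e : B2 = set0 by move/eqP: Pe; rewrite imset_eq0 => /eqP.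
  apply/setP => x; rewrite inE; apply/negbTE/negP => Hx.
  case: (boolP (x \in T1)) => Hf.
    have : x \in A :&: T1 by rewrite inE Hx Hf.
    by rewrite E1 B1e imset0 inE.
  have : x \in A :\: T1 by rewrite inE Hx Hf.
  by rewrite E2 B2e imset0 inE.
Qed.
Lemma set0_I0 (K : {set 'I_0}) : K = set0.
Proof. by apply/setP => -[]. Qed.

Lemma base_basis : margolis_basis (Beven 0).
Proof.
rewrite /=; split.
- by move=> b _; rewrite Pop_0.
- move=> z _.
  case: (F2_cases (z set0)) => Hz.
    exists set0; first exact: sub0set.
    exists 0; rewrite big_set0 Pop0 addr0; apply/ffunP => K.
    by rewrite (set0_I0 K) Hz ffunE.
  exists [set mono set0]; first by [].
  exists 0; rewrite big_set1 Pop0 addr0; apply/ffunP => K.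
  by rewrite (set0_I0 K) Hz ffunE eqxx.
- move=> A HA [y Hy]; move: HA; rewrite subset1 => /orP [/eqP HA|/eqP //].
  exfalso; move: Hy; rewrite HA big_set1 Pop_0 => /ffunP /(_ set0).
  by rewrite !ffunE eqxx => /eqP; rewrite oner_eq0.
Qed.

Lemma exch_mono0 : exch (mono (set0 : {set 'I_0})) = mono set0.
Proof. by rewrite exch_mono setC0 (set0_I0 setT). Qed.

Lemma base_J b : b \in Beven 0 -> J b.
Proof.
rewrite /= inE => /eqP ->; split; rewrite ?Pop_0 ?Q1_0 //.
by rewrite exch_mono0 addxx.
Qed.

Lemma Cstep t : [/\ margolis_basis (Beven t), (forall b, b \in Beven t -> J b)
                  & (forall b, b \in Beven t -> exch b \in Beven t)].
Proof.
elim: t => [|t [HB HJ HE]].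
  split; [exact: base_basis | exact: base_J |].
  by move=> b; rewrite /= !inE => /eqP ->; rewrite exch_mono0.
have Hn : ~~ odd t.*2 by rewrite odd_double.
have Hn2 : ~~ odd (t.*2).+2 by rewrite /= negbK.
split.
- exact: (even_step Hn HB HJ HE).
- move=> y; rewrite /= inE => /orP [] /imsetP [b Hb ->].
    exact: J_step Hn (HJ b Hb).
  rewrite -Ex; apply: (J_exch Hn2); exact: J_step Hn (HJ b Hb).
- move=> y; rewrite /= inE => /orP [] /imsetP [b Hb ->]; rewrite inE; apply/orP.
    by right; rewrite Ex; apply: imset_f.
  by left; rewrite Et EE; apply: imset_f.
Qed.

Theorem mainTheorem11 :
  forall t : nat, margolis_basis (Beven t) /\ margolis_basis (Bodd t).
Proof.
move=> t; case: (Cstep t) => HB HJ HE; split => //.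
have Hn : ~~ odd t.*2 by rewrite odd_double.
exact: (odd_step Hn HB HJ HE).
Qed.
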